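(* For all $n\in\mathbf N$ and integers $m$ with $0\le m\le n-1$, $$\left\langle{n\atop m}\right\rangle=\left\langle{n-1\atop m}\right\rangle^{(1,0)} .$$
   Context: Euler numbers: $\left\langle{0\atop 0}\right\rangle=1$, $\left\langle{n\atop k}\right\rangle=0$ for $k<0$ or $k>n$, $\left\langle{n\atop k}\right\rangle=(n-k)\left\langle{n-1\atop k-1}\right\rangle+(k+1)\left\langle{n-1\atop k}\right\rangle$. For sequences $a=(a_j)_{j\ge1}$, $b=(b_j)_{j\ge0}$ and $\omega=(\varepsilon_1,\dots,\varepsilon_N)\in\{0,1\}^N$ let $w^{a,b}_N(\omega)=\prod_{t=1}^N g_t$ where, with $j=\#\{l<t:\varepsilon_l=0\}$, $g_t=a_{t-j}$ if $\varepsilon_t=0$ and $g_t=b_j$ if $\varepsilon_t=1$; let $\zeta_{Nk}(a,b)=\sum w^{a,b}_N(\omega)$ over $\omega$ with exactly $k$ zeros ($N\ge1$, $0\le k\le N$), $\zeta_{00}=1$, $\zeta_{Nk}=0$ if $k<0$ or $k>N$. For integers $0\le\mu\le\nu$, the associated Euler numbers of rank $(\nu,\mu)$ are $\left\langle{N\atop k}\right\rangle^{(\nu,\mu)}=\zeta_{Nk}(a,b)$ with $a_j=\nu-\mu+j-1$ $(j\ge1)$ and $b_j=\mu+j+1$ $(j\ge0)$ (i.e. the sequences $\alpha_l=l-1$, $\beta_j=j+1$ shifted by $\nu-\mu$ and $\mu$ respectively). *)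

(* Defs.v *)
From mathcomp Require Import all_boot.
Set Implicit Arguments. Unset Strict Implicit. Unset Printing Implicit Defensive.

Fixpoint euler (n k : nat) : nat :=
  match n with
  | 0 => (k == 0)
  | n'.+1 =>
      if k <= n'.+1 then
        (if k is k'.+1 then (n'.+1 - k) * euler n' k' else 0)
        + k.+1 * euler n' k
      else 0
  end.

(* A word omega = (eps_1, ..., eps_N) is w : {ffun 'I_N -> bool}, with
   eps_{i+1} = w i (true = 1, false = 0).
   For t = i+1, j = #{l < t : eps_l = 0} = #{l' < i : w l' = false}. *)
Definition nzeros_before (N : nat) (w : {ffun 'I_N -> bool}) (i : 'I_N) : nat :=
  #|[set l : 'I_N | (l < i) && ~~ w l]|.

Definition gfac (a b : nat -> nat) (N : nat) (w : {ffun 'I_N -> bool})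
  (i : 'I_N) : nat :=
  let j := nzeros_before w i in
  if w i then b j else a (i.+1 - j).

Definition weight (a b : nat -> nat) (N : nat) (w : {ffun 'I_N -> bool}) : nat :=
  \prod_(i < N) gfac a b w i.

Definition zeta (a b : nat -> nat) (N k : nat) : nat :=
  if N is 0 then (k == 0 : nat)
  else \sum_(w : {ffun 'I_N -> bool} | #|[set i | ~~ w i]| == k) weight a b w.

Definition assoc_euler (nu mu N k : nat) : nat :=
  zeta (fun j => nu - mu + j - 1) (fun j => mu + j + 1) N k.

(* Main.v *)
Require Import Defs.
From mathcomp Require Import all_boot.
From mathcomp Require Import zify.
Set Implicit Arguments. Unset Strict Implicit. Unset Printing Implicit Defensive.

Lemma euler_gt n k : n < k -> euler n k = 0.
Proof.
elim: n k => [|n IH] [|k] //= H.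
by case: ifP => // H'; lia.
Qed.

Lemma euler_rec n k : euler n.+1 k =
  (if k is k'.+1 then (n.+1 - k) * euler n k' else 0) + k.+1 * euler n k.
Proof.
rewrite /=; case: ifP => // /negbT; rewrite -ltnNge => H.
rewrite euler_gt ?muln0 ?addn0; last by lia.
case: k H => // k H; rewrite euler_gt ?muln0 //; lia.
Qed.

Definition zs a b N k :=
  \sum_(w : {ffun 'I_N -> bool} | #|[set i | ~~ w i]| == k) weight a b w.

Lemma nzerosE N (w : {ffun 'I_N -> bool}) :
  #|[set i | ~~ w i]| = \sum_(i < N) ~~ w i.
Proof.
rewrite -sum1_card big_mkcond /=; apply: eq_bigr => i _; rewrite inE.
by case: (w i).
Qed.

Lemma nzbE N (w : {ffun 'I_N -> bool}) i :
  nzeros_before w i = \sum_(l < N) ((l < i) && ~~ w l).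
Proof.
rewrite /nzeros_before -sum1_card big_mkcond /=; apply: eq_bigr => l _.
rewrite inE; by case: (_ && _).
Qed.

Lemma zetaE a b N k : zeta a b N k = zs a b N k.
Proof.
case: N => // ; rewrite /zs /=.
rewrite (eq_bigr (fun _ => 1)); last by move=> w _; rewrite /weight big_ord0.
rewrite (eq_bigl (fun _ => k == 0)); last first.
  by move=> w; rewrite nzerosE big_ord0 eq_sym.
case: (k == 0); last by rewrite big_pred0.
by rewrite sum1_card card_ffun card_ord.
Qed.

Definition ext N (w : {ffun 'I_N -> bool}) (c : bool) : {ffun 'I_N.+1 -> bool} :=
  [ffun i => if unlift ord_max i is Some j then w j else c].

Definition res N (w : {ffun 'I_N.+1 -> bool}) : {ffun 'I_N -> bool} * bool :=
  ([ffun i => w (lift ord_max i)], w ord_max).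

Lemma ext_lift N (w : {ffun 'I_N -> bool}) (c : bool) (i : 'I_N) : ext w c (lift ord_max i) = w i.
Proof. by rewrite /ext ffunE liftK. Qed.

Lemma ext_max N (w : {ffun 'I_N -> bool}) c : ext w c ord_max = c.
Proof. by rewrite /ext ffunE unlift_none. Qed.

Lemma ext_bij N : bijective (fun p : {ffun 'I_N -> bool} * bool => ext p.1 p.2).
Proof.
exists (@res N).
  move=> [w c]; rewrite /res /= ext_max; congr (_, _).
  by apply/ffunP => i; rewrite ffunE ext_lift.
move=> w; apply/ffunP => i; rewrite /ext /res ffunE /=.
by case: unliftP => [j ->|->]; rewrite ?ffunE.
Qed.

Lemma sum_ext N (F : {ffun 'I_N.+1 -> bool} -> nat) :
  \sum_w F w = \sum_(w : {ffun 'I_N -> bool}) (F (ext w true) + F (ext w false)).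
Proof.
rewrite (reindex _ (onW_bij _ (@ext_bij N))) /=.
rewrite -(pair_big xpredT xpredT (fun w c => F (ext w c))) /=.
by apply: eq_bigr => w _; rewrite big_bool.
Qed.

Lemma widen_lift N (i : 'I_N) : widen_ord (leqnSn N) i = lift ord_max i.
Proof. by apply: ord_inj; rewrite lift_max. Qed.

Lemma z_ext N (w : {ffun 'I_N -> bool}) c :
  #|[set i | ~~ ext w c i]| = #|[set i | ~~ w i]| + ~~ c.
Proof.
rewrite !nzerosE big_ord_recr /= ext_max; congr (_ + _).
by apply: eq_bigr => i _; rewrite widen_lift ext_lift.
Qed.

Lemma weight_ext a b N (w : {ffun 'I_N -> bool}) c :
  weight a b (ext w c) = weight a b w *
    (if c then b #|[set i | ~~ w i]| else a (N.+1 - #|[set i | ~~ w i]|)).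
Proof.
rewrite /weight big_ord_recr /=; congr (_ * _).
  apply: eq_bigr => i _; rewrite /gfac widen_lift ext_lift.
  congr (if _ then b _ else a (_ - _)).
  - rewrite !nzbE big_ord_recr lift_max /= ltnNge (ltnW (ltn_ord i)) /= addn0.
    by apply: eq_bigr => l _; rewrite widen_lift ext_lift ?lift_max.
  - by rewrite lift_max.
  - rewrite !nzbE big_ord_recr lift_max /= ltnNge (ltnW (ltn_ord i)) /= addn0.
    by apply: eq_bigr => l _; rewrite widen_lift ext_lift ?lift_max.
rewrite /gfac ext_max nzbE nzerosE big_ord_recr /= ltnn /= addn0.
have -> : \sum_(i < N) (widen_ord (leqnSn N) i < N) && ~~ ext w c (widen_ord (leqnSn N) i)
   = \sum_(i < N) ~~ w i.
  by apply: eq_bigr => i _; rewrite widen_lift ext_lift lift_max ltn_ord.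
by [].
Qed.

Lemma zs_rec a b N k : zs a b N.+1 k =
  zs a b N k * b k + (if k is k'.+1 then zs a b N k' * a (N.+1 - k') else 0).
Proof.
rewrite /zs big_mkcond sum_ext big_split /=; congr (_ + _).
  rewrite big_distrl /= [RHS]big_mkcond /=; apply: (@eq_bigr nat 0 addn) => w _.
  by rewrite z_ext weight_ext addn0; case: eqP => // ->.
case: k => [|k].
  by rewrite big1 // => w _; rewrite z_ext addn1.
rewrite big_distrl /= [RHS]big_mkcond /=; apply: (@eq_bigr nat 0 addn) => w _.
by rewrite z_ext weight_ext addn1 eqSS; case: eqP => // ->.
Qed.

Lemma main_gen N k : euler N.+1 k = assoc_euler 1 0 N k.
Proof.
rewrite /assoc_euler zetaE.
elim: N k => [|N IH] k.
  rewrite /zs; rewrite (eq_bigr (fun _ => 1)); last by move=> w _; rewrite /weight big_ord0.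
  rewrite (eq_bigl (fun _ => k == 0)); last by move=> w; rewrite nzerosE big_ord0 eq_sym.
  case: k => [|k].
    by rewrite sum1_card card_ffun card_ord.
  rewrite big_pred0 => [|?] //; case: k => // k; exact: euler_gt.
rewrite euler_rec zs_rec -!IH addnC; congr (_ + _).
  by rewrite mulnC; congr (_ * _); lia.
case: k => // k; rewrite IH mulnC; congr (_ * _); lia.
Qed.

Theorem mainTheorem14 (n m : nat) (hm : m <= n - 1) (hn : 0 < n) :
  euler n m = assoc_euler 1 0 (n - 1) m.
Proof. by case: n hn hm => // n _ _; rewrite subn1; exact: main_gen. Qed.
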